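(* For every sequent $\Gamma$ and every formula $A$ of MRL, the sequent $\Gamma, \mathcal{R}{:}A$ (where $\mathcal{R}$ is the full set of roles) is derivable in MRL.
   Context: Fix a nonempty set $\mathcal{R}$ (the set of roles). For $R\subseteq\mathcal{R}$ write $\overline{R}=\mathcal{R}\setminus R$. An ultrafilter $\mathcal{U}$ on $\mathcal{R}$ is a set of subsets of $\mathcal{R}$ such that $\mathcal{R}\in\mathcal{U}$; $R_1\in\mathcal{U}$ and $R_1\subseteq R_2$ imply $R_2\in\mathcal{U}$; $R_1,R_2\in\mathcal{U}$ imply $R_1\cap R_2\in\mathcal{U}$; and for every $R\subseteq\mathcal{R}$, $R\in\mathcal{U}$ or $\overline{R}\in\mathcal{U}$. An endomorphism is any function $f:\mathcal{R}\to\mathcal{R}$, and $f^{-1}(R)$ denotes the preimage of $R$. Fix a first-order language of terms $t$ with variables $x$, and a collection of primitive (atomic) formulas $a$ (which may contain terms). Formulas of MRL: $A ::= a \mid \neg_f(A) \mid A_1\wedge_{\mathcal{U}} A_2 \mid A\supset_{f,\mathcal{U}} B \mid \forall_{\mathcal{U}}(\lambda x.A)$, with $f$ an endomorphism and $\mathcal{U}$ an ultrafilter on $\mathcal{R}$; $x$ is bound in $\forall_{\mathcal{U}}(\lambda x.A)$, and $A[t/x]$ is capture-avoiding substitution. An i-formula is a pair $R{:}A$ with $R\subseteq\mathcal{R}$ and $A$ a formula; a sequent is a finite multiset of i-formulas, and comma denotes multiset union. Derivability in MRL is given by the rules (premises $\Rightarrow$ conclusion, $\Gamma,\Gamma_1,\Gamma_2$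 arbitrary sequents): (Id) $\Gamma, R_1{:}a,\ldots,R_n{:}a$ is derivable whenever $n\ge1$ and $R_1,\ldots,R_n$ are pairwise disjoint with union $\mathcal{R}$; (Weaken) $\Gamma,R{:}A,R{:}A \Rightarrow \Gamma,R{:}A$; ($\neg$) $\Gamma, f^{-1}(R){:}A \Rightarrow \Gamma, R{:}\neg_f(A)$; ($\wedge$-neg-l) if $R\notin\mathcal{U}$: $\Gamma,R{:}A\Rightarrow\Gamma,R{:}A\wedge_{\mathcal{U}}B$; ($\wedge$-neg-r) if $R\notin\mathcal{U}$: $\Gamma,R{:}B\Rightarrow\Gamma,R{:}A\wedge_{\mathcal{U}}B$; ($\wedge$-pos) if $R\in\mathcal{U}$: $(\Gamma,R{:}A;\ \Gamma,R{:}B)\Rightarrow\Gamma,R{:}A\wedge_{\mathcal{U}}B$; ($\supset$-neg) if $R\notin\mathcal{U}$: $\Gamma,f^{-1}(R){:}A,R{:}B\Rightarrow\Gamma,R{:}A\supset_{f,\mathcal{U}}B$; ($\supset$-pos) if $R\in\mathcal{U}$: $(\Gamma_1,f^{-1}(R){:}A;\ \Gamma_2,R{:}B)\Rightarrow\Gamma_1,\Gamma_2,R{:}A\supset_{f,\mathcal{U}}B$; ($\forall$-neg) if $R\notin\mathcal{U}$ and $t$ is a term: $\Gamma,R{:}A[t/x]\Rightarrow\Gamma,R{:}\forall_{\mathcal{U}}(\lambda x.A)$; ($\forall$-pos) if $R\in\mathcal{U}$ and $x$ has no free occurrence in $\Gamma$: $\Gamma,R{:}A\Rightarrow\Gamma,R{:}\forall_{\mathcal{U}}(\lambda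 x.A)$. A sequent is derivable in MRL if it is the conclusion of a finite derivation tree built from these rules. *)

(* Defs.v *)
From Stdlib Require Import List PeanoNat Permutation.
Import ListNotations.

Set Implicit Arguments.

Section MRL.

Context {Role Fn Pred : Type}.

Definition rset := Role -> Prop.
Definition full : rset := fun _ => True.
Definition compl (R : rset) : rset := fun r => ~ R r.
Definition preim (f : Role -> Role) (R : rset) : rset := fun r => R (f r).

Record ultrafilter := {
  uf_mem :> rset -> Prop;
  uf_full : uf_mem full;
  uf_up : forall R1 R2 : rset, uf_mem R1 -> (forall r, R1 r -> R2 r) -> uf_mem R2;
  uf_cap : forall R1 R2 : rset, uf_mem R1 -> uf_mem R2 -> uf_mem (fun r => R1 r /\ R2 r);
  uf_compl : forall R : rset, uf_mem R \/ uf_mem (compl R)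
}.

(* first-order terms; variables are de Bruijn indices *)
Inductive term : Type :=
| Var : nat -> term
| App : Fn -> list term -> term.

Fixpoint tlift (c : nat) (t : term) : term :=
  match t with
  | Var n => Var (if n <? c then n else S n)
  | App f ts => App f (map (tlift c) ts)
  end.

(* substitute u for variable k and lower the variables above k *)
Fixpoint tsubst (k : nat) (u : term) (t : term) : term :=
  match t with
  | Var n => if n <? k then Var n
             else if n =? k then Nat.iter k (tlift 0) u
             else Var (pred n)
  | App f ts => App f (map (tsubst k u) ts)
  end.

Inductive formula : Type :=
| Atom : Pred -> list term -> formula
| Neg : (Role -> Role) -> formula -> formula
| And : ultrafilter -> formula -> formula -> formula
| Imp : (Role -> Role) -> ultrafilter -> formula -> formula -> formula
| All : ultrafilter -> formula -> formula.  (* binds de Bruijn index 0 *)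

Fixpoint flift (c : nat) (A : formula) : formula :=
  match A with
  | Atom p ts => Atom p (map (tlift c) ts)
  | Neg f A => Neg f (flift c A)
  | And U A B => And U (flift c A) (flift c B)
  | Imp f U A B => Imp f U (flift c A) (flift c B)
  | All U A => All U (flift (S c) A)
  end.

Fixpoint fsubst (k : nat) (u : term) (A : formula) : formula :=
  match A with
  | Atom p ts => Atom p (map (tsubst k u) ts)
  | Neg f A => Neg f (fsubst k u A)
  | And U A B => And U (fsubst k u A) (fsubst k u B)
  | Imp f U A B => Imp f U (fsubst k u A) (fsubst k u B)
  | All U A => All U (fsubst (S k) u A)
  end.

(* A[t/x] for the body A of forall_U (lambda x. A) *)
Definition inst (A : formula) (t : term) : formula := fsubst 0 t A.

Definition iformula := (rset * formula)%type.

(* sequents are finite multisets: lists taken up to permutation (rule ex) *)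
Definition sequent := list iformula.

(* shifting all free variables of a sequent: the bound variable of a
   forall becomes index 0, which then has no free occurrence in the
   shifted sequent (eigenvariable condition of forall-pos). *)
Definition slift (G : sequent) : sequent :=
  map (fun i => (fst i, flift 0 (snd i))) G.

Definition disjoint (R1 R2 : rset) : Prop := forall r, ~ (R1 r /\ R2 r).

Inductive derivable : sequent -> Prop :=
| d_ex : forall G G', Permutation G G' -> derivable G -> derivable G'
| d_id : forall G (Rs : list rset) p ts,
    Rs <> [] ->
    ForallOrdPairs disjoint Rs ->
    (forall r, Exists (fun R => R r) Rs) ->
    derivable (G ++ map (fun R => (R, Atom p ts)) Rs)
| d_weaken : forall G R A,
    derivable (G ++ [(R, A); (R, A)]) -> derivable (G ++ [(R, A)])
| d_neg : forall G f R A,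
    derivable (G ++ [(preim f R, A)]) -> derivable (G ++ [(R, Neg f A)])
| d_and_neg_l : forall G (U : ultrafilter) R A B,
    ~ U R -> derivable (G ++ [(R, A)]) -> derivable (G ++ [(R, And U A B)])
| d_and_neg_r : forall G (U : ultrafilter) R A B,
    ~ U R -> derivable (G ++ [(R, B)]) -> derivable (G ++ [(R, And U A B)])
| d_and_pos : forall G (U : ultrafilter) R A B,
    U R -> derivable (G ++ [(R, A)]) -> derivable (G ++ [(R, B)]) ->
    derivable (G ++ [(R, And U A B)])
| d_imp_neg : forall G f (U : ultrafilter) R A B,
    ~ U R -> derivable (G ++ [(preim f R, A); (R, B)]) ->
    derivable (G ++ [(R, Imp f U A B)])
| d_imp_pos : forall G1 G2 f (U : ultrafilter) R A B,
    U R -> derivable (G1 ++ [(preim f R, A)]) -> derivable (G2 ++ [(R, B)]) ->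
    derivable (G1 ++ G2 ++ [(R, Imp f U A B)])
| d_all_neg : forall G (U : ultrafilter) R A (t : term),
    ~ U R -> derivable (G ++ [(R, inst A t)]) -> derivable (G ++ [(R, All U A)])
| d_all_pos : forall G (U : ultrafilter) R A,
    U R -> derivable (slift G ++ [(R, A)]) -> derivable (G ++ [(R, All U A)]).

End MRL.

(* Main.v *)
Require Import Defs.
From Stdlib Require Import List.
Import ListNotations.

Theorem mainTheorem2 (Role Fn Pred : Type) (r0 : Role)
  (G : @sequent Role Fn Pred) (A : @formula Role Fn Pred) :
  derivable (G ++ [(full, A)]).
Proof.
  revert G; induction A as [p ts|f A IH|U A IHA B IHB|f U A IHA B IHB|U A IH]; intro G.
  - pose proof (@d_id Role Fn Pred G [full] p ts) as H. simpl in H. apply H.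
    + discriminate.
    + constructor; constructor.
    + intro r. constructor. exact I.
  - apply d_neg. exact (IH G).
  - apply d_and_pos; [apply uf_full | apply IHA | apply IHB].
  - pose proof (@d_imp_pos Role Fn Pred G [] f U full A B (uf_full U) (IHA G) (IHB [])) as H.
    exact H.
  - apply d_all_pos; [apply uf_full | apply IH].
Qed.
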